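(* Let $d\ge3$, $h\ge1$, and let $\ell$ be a leaf (a vertex at distance $h$ from the root). Then the order of $\bar{\mathbf{x}}_\ell$ in $G(d,h)$ divides $$(d-1)^h\cdot\operatorname{lcm}\{d\,\theta(d,h+1),\theta(d,h),\theta(d,h-1),\dots,\theta(d,2)\},$$ where $\theta(d,m):=\frac{(d-1)^m-1}{d-2}$.
   Context: Let $\mathcal{T}(d,h)$ be the rooted tree in which the root $0$ has $d$ children, every vertex at distance $1,\dots,h-1$ from the root has $d-1$ children, and the vertices at distance $h$ are leaves. Let $V$ be its vertex set, $A$ its adjacency matrix, $\Delta := dI-A$, and $\Lambda\subset\mathbb{Z}^V$ the lattice spanned by the rows of $\Delta$. Then $G(d,h):=\mathbb{Z}^V/\Lambda$; $\{\mathbf{x}_i:i\in V\}$ is the standard basis of $\mathbb{Z}^V$ and $\bar{\mathbf{v}}$ denotes the image of $\mathbf{v}$ in $G(d,h)$. *)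

(* Defs.v *)
From HB Require Import structures.
From mathcomp Require Import all_boot all_order all_algebra.
Set Implicit Arguments. Unset Strict Implicit. Unset Printing Implicit Defensive.
Import GRing.Theory Num.Theory.

(* Vertices of T(d,h) are encoded as words (paths from the root):
   the root is [::]; a word [:: a0; a1; ...; a_{k-1}] (k <= h) is the
   a_{k-1}-th child of ... of the a0-th child of the root, with a0 < d and
   a_i < d-1 for i >= 1.  The vertex at distance k from the root is a word
   of size k. *)
Definition valid_word (d h : nat) (s : seq nat) : bool :=
  (size s <= h) &&
  (if s is a :: t then (a < d) && all (fun b => b < d.-1) t else true).

Fixpoint words (d n : nat) : seq (seq nat) :=
  if n is n'.+1 then [seq a :: w | a <- iota 0 d, w <- words d n'] else [:: [::]].

Definition tree_words (d h : nat) : seq (seq nat) :=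
  [seq s <- flatten [seq words d k | k <- iota 0 h.+1] | valid_word d h s].

Definition tvert (d h : nat) : finType := seq_sub (tree_words d h).

Definition root_vertex (d h : nat) (r : tvert d h) : bool := val r == [::].

Definition tadj (d h : nat) (u v : tvert d h) : bool :=
  [exists a : 'I_d, (val v == rcons (val u) a) || (val u == rcons (val v) a)].

Definition Delta (d h : nat) (i j : tvert d h) : int :=
  (Posz d * Posz (i == j) - Posz (tadj i j))%R.

Definition zvec (d h : nat) := {ffun tvert d h -> int}.

Definition in_Lambda (d h : nat) (x : zvec d h) : Prop :=
  exists c : {ffun tvert d h -> int},
    forall j, x j = (\sum_(i : tvert d h) c i * Delta i j)%R.

Definition basis_vec (d h : nat) (i : tvert d h) : zvec d h :=
  [ffun j => Posz (i == j)].

(* n is the order of the image of x in G(d,h) = Z^V / Lambda *)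
Definition order_in_G (d h : nat) (x : zvec d h) (n : nat) : Prop :=
  0 < n /\ in_Lambda (x *+ n)%R /\
  forall k, 0 < k < n -> ~ in_Lambda (x *+ k)%R.

(* theta(d,m) = ((d-1)^m - 1)/(d-2), an exact division for d >= 3 *)
Definition theta (d m : nat) : nat := ((d.-1) ^ m - 1) %/ (d - 2).

Definition bound (d h : nat) : nat :=
  (d.-1) ^ h * lcmn (d * theta d h.+1) (\big[lcmn/1]_(2 <= m < h.+1) theta d m).

(* Main.v *)
Require Import Defs.
From mathcomp Require Import all_boot all_order all_algebra.
From mathcomp Require Import zify ring.
From Stdlib Require Import Classical.
Set Implicit Arguments. Unset Strict Implicit.

Lemma theta0 d : theta d 0 = 0.
Proof. by rewrite /theta expn0 subnn div0n. Qed.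

Lemma thetaS d m : 3 <= d -> theta d m.+1 = d.-1 * theta d m + 1.
Proof.
move=> hd.
have key : forall m, (d.-1 ^ m - 1) = (d - 2) * ((d.-1 ^ m - 1) %/ (d - 2)).
  move=> n; apply/esym/eqP; rewrite mulnC -dvdn_eq.
  have -> : d.-1 = (d - 2) + 1 by lia.
  elim: n => [|n IH]; first by rewrite expn0 subnn dvdn0.
  have h1 : 1 <= (d - 2 + 1) ^ n by rewrite expn_gt0 addn1.
  have -> : (d - 2 + 1) ^ n.+1 - 1 = (d-2) * (d - 2 + 1) ^ n + ((d - 2 + 1) ^ n - 1).
    rewrite expnS; lia.
  by rewrite dvdn_add // dvdn_mulr.
rewrite /theta.
have hp : 0 < d - 2 by lia.
apply/eqP; rewrite -(eqn_pmul2l hp) -key mulnDr mulnCA -key.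
have h1 : 1 <= d.-1 ^ m by rewrite expn_gt0; lia.
rewrite expnS; apply/eqP; nia.
Qed.

Section Arith.
Variables (d h : nat).
Hypothesis hd : 3 <= d.
Hypothesis hh : 1 <= h.

Local Notation q := d.-1.
Local Notation th := (theta d).
Definition LL := lcmn (d * th h.+1) (\big[lcmn/1]_(2 <= m < h.+1) th m).
Definition NN := q ^ h * LL.
Definition AA m := NN %/ (th m.+1 * th m).
Definition U0 := LL %/ (d * th h.+1).
Definition UU j := U0 + \sum_(i < j) AA (h - i).

Lemma th1 : th 1 = 1. Proof. by rewrite thetaS // theta0 muln0. Qed.
Lemma th2 : th 2 = d. Proof. rewrite thetaS // th1; lia. Qed.
Lemma th_pos m : 0 < m -> 0 < th m.
Proof. by case: m => // m _; rewrite thetaS // addn1. Qed.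
Lemma th_rec m : d * th m.+1 = th m.+2 + q * th m.
Proof.
rewrite !thetaS //; move: (th m) => t.
have -> : d = q.+1 by lia.
rewrite -pred_Sn; ring.
Qed.
Lemma th_diff m : th m.+1 = th m + q ^ m.
Proof.
elim: m => [|m IH]; first by rewrite th1 theta0.
rewrite thetaS // {1}IH expnS thetaS //; ring.
Qed.
Lemma th_cop m : coprime (th m.+1) (th m).
Proof. by rewrite coprime_sym /coprime thetaS // gcdnMDl gcdn1. Qed.

Lemma dvd_big n m : 2 <= m < n -> th m %| \big[lcmn/1]_(2 <= i < n) th i.
Proof.
elim: n => [|n IH] hm; first lia.
rewrite big_nat_recr /=; last lia.
case: (ltnP m n) => hmn.
  by apply: dvdn_trans (IH _) (dvdn_lcml _ _); lia.
have -> : m = n by lia.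
exact: dvdn_lcmr.
Qed.

Lemma th_dvd m : 1 <= m <= h.+1 -> th m %| LL.
Proof.
move=> hm; rewrite /LL.
case: (ltnP m h.+1) => hmh.
  case: (ltnP 1 m) => h1.
    by apply: dvdn_trans (dvd_big _) (dvdn_lcmr _ _); lia.
  have -> : m = 1 by lia.
  by rewrite th1 dvd1n.
have -> : m = h.+1 by lia.
by apply: dvdn_trans (dvdn_mull _ _) (dvdn_lcml _ _).
Qed.

Lemma AA_spec m : 1 <= m <= h -> AA m * (th m.+1 * th m) = NN.
Proof.
move=> hm; rewrite /AA divnK // /NN dvdn_mull // Gauss_dvd ?th_cop //.
by rewrite !th_dvd //; lia.
Qed.

Lemma U0_spec : U0 * (d * th h.+1) = LL.
Proof. by rewrite /U0 divnK // dvdn_lcml. Qed.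

Lemma UU_S j : UU j.+1 = UU j + AA (h - j).
Proof. by rewrite /UU big_ord_recr /= addnA. Qed.

Lemma UU0 : UU 0 = U0.
Proof. by rewrite /UU big_ord0 addn0. Qed.

Lemma eqn_off k : 1 <= k < h -> forall U,
  d * (U * th (h.+1 - k)) = U * th (h.+2 - k) + q * (U * th (h - k)).
Proof.
move=> hk U.
have -> : h.+1 - k = (h - k).+1 by lia.
have -> : h.+2 - k = (h - k).+2 by lia.
have := th_rec (h - k); nia.
Qed.

Lemma eqn_offleaf U : d * (U * th 1) = U * th 2.
Proof. rewrite th1 th2; nia. Qed.

Lemma eqn_root : d * (UU 0 * th h.+1) = q * (UU 0 * th h) + UU 1 * th h.
Proof.
rewrite UU_S UU0 subn0.
have hA := AA_spec (m:=h) ltac:(lia).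
have hU := U0_spec.
have hD := th_diff h.
have hp : 0 < th h.+1 by apply th_pos.
apply/eqP; rewrite -(eqn_pmul2r hp); apply/eqP.
move: hA hU; rewrite /NN.
have hdq : d = q + 1 by lia.
rewrite hD; rewrite hD in hp.
move: (th h) (q ^ h) hp => t Q hp hA hU.
rewrite -hU in hA.
nia.
Qed.

Lemma eqn_mid k : 1 <= k < h ->
  d * (UU k * th (h.+1 - k)) = UU k.-1 * th (h.+2 - k) + ((q - 1) * UU k + UU k.+1) * th (h - k).
Proof.
move=> hk.
have e1 : h.+1 - k = (h - k).+1 by lia.
have e2 : h.+2 - k = (h - k).+2 by lia.
rewrite e1 e2.
have hm := th_rec (h - k).
have hA1 := AA_spec (m := (h-k).+1) ltac:(lia).
have hA2 := AA_spec (m := (h-k)) ltac:(lia).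
have hp : 0 < th (h - k).+1 by apply th_pos.
have eU : UU k = UU k.-1 + AA (h - k.-1) by rewrite -UU_S; congr UU; lia.
have e3 : h - k.-1 = (h - k).+1 by lia.
rewrite e3 in eU.
rewrite UU_S.
have key : AA (h-k).+1 * th (h-k).+2 = AA (h - k) * th (h - k).
  apply/eqP; rewrite -(eqn_pmul2r hp); apply/eqP.
  rewrite -mulnA hA1 -hA2; nia.
rewrite eU in hm *.
have hdq : d = q + 1 by lia.
nia.
Qed.

Lemma eqn_leaf : d * (UU h * th 1) = UU h.-1 * th 2 + NN.
Proof.
rewrite th1 th2.
have eU : UU h = UU h.-1 + AA (h - h.-1) by rewrite -UU_S; congr UU; lia.
have e3 : h - h.-1 = 1 by lia.
rewrite e3 in eU.
have := AA_spec (m:=1) ltac:(lia).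
rewrite th1 th2 => hA.
rewrite eU; nia.
Qed.

End Arith.

Lemma mem_words d n s : (s \in words d n) = (size s == n) && all (fun a => a < d) s.
Proof.
elim: n s => [|n IH] s /=.
  by case: s.
apply/allpairsP/idP => [[[a w]] /= [ha hw ->]|].
  rewrite mem_iota in ha; rewrite /= eqSS; move: hw; rewrite IH => /andP [-> ->]; rewrite andbT; lia.
case: s => // a w /= /and3P [hs ha hw].
by exists (a, w); split => /=; [rewrite mem_iota; lia | rewrite IH -eqSS hs hw | by []].
Qed.

Lemma valid_all d h s : valid_word d h s -> all (fun a => a < d) s.
Proof.
case/andP=> _; case: s => //= a t /andP [-> ht] /=.
by apply: sub_all ht => b /= hb; apply: leq_trans hb _; apply: leq_pred.
Qed.

Lemma mem_tw d h s : (s \in tree_words d h) = valid_word d h s.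
Proof.
rewrite mem_filter andbC; case hv: (valid_word d h s); last by rewrite andbF.
rewrite andbT; apply/flatten_mapP; exists (size s).
  by rewrite mem_iota add0n ltnS; case/andP: hv.
by rewrite mem_words eqxx (valid_all hv).
Qed.

Fixpoint lcp (s t : seq nat) : nat :=
  match s, t with
  | x :: s', y :: t' => if x == y then (lcp s' t').+1 else 0
  | _, _ => 0
  end.

Lemma lcp_le s t : lcp s t <= size s.
Proof. elim: s t => [|x s IH] [|y t] //=; case: (x == y) => //; exact: IH. Qed.

Lemma lcp_eq s t : lcp s t = size s -> size s = size t -> s = t.
Proof.
elim: s t => [|x s IH] [|y t] //=; case: eqP => // -> [e] [e2].
by rewrite (IH t e e2).
Qed.

Lemma lcp_refl s : lcp s s = size s.
Proof. by elim: s => //= x s ->; rewrite eqxx. Qed.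

Lemma lcp_rcons s a t : lcp (rcons s a) t =
  if (lcp s t == size s) && (nth 0 t (size s) == a) && (size s < size t)
  then (size s).+1 else lcp s t.
Proof.
elim: s t => [|x s IH] [|y t] /=; try by rewrite andbF.
  by rewrite eq_sym andbT; case: (y == a).
  by [].
case: (x == y) => //=; rewrite IH eqSS ltnS.
by case: ifP.
Qed.

Import GRing.Theory.

Section Sums.
Local Open Scope ring_scope.
Variables d h : nat.

Lemma sum_val (s : seq nat) (F : seq nat -> int) :
  \sum_(i : tvert d h) (if val i == s then F (val i) else 0) =
  if s \in tree_words d h then F s else 0.
Proof.
case: ifP => hs.
  rewrite (bigD1 (SeqSub hs)) //= eqxx big1 ?addr0 // => i /negbTE hi.
  case: eqP => // e; exfalso; move: hi; suff -> : i = SeqSub hs by rewrite eqxx.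
  by apply: val_inj.
rewrite big1 // => i _; case: eqP => // e.
by move: (valP i); rewrite e hs.
Qed.

Lemma sum_pred1 (j : tvert d h) (F : tvert d h -> int) :
  \sum_(i : tvert d h) F i * (Posz (i == j)) = F j.
Proof.
rewrite (bigD1 j) //= eqxx mulr1 big1 ?addr0 // => i /negbTE ->.
by rewrite mulr0.
Qed.

Lemma exists_sum (Q : 'I_d -> bool) :
  (forall a b, Q a -> Q b -> a = b) ->
  Posz [exists a, Q a] = \sum_(a < d) Posz (Q a).
Proof.
move=> uQ; case: existsP => [[a0 ha0]|hn].
  rewrite (bigD1 a0) //= ha0 big1 ?addr0 // => b hb.
  by case hQ: (Q b) => //; move: hb; rewrite (uQ _ _ hQ ha0) eqxx.
rewrite big1 // => a _; case hQ: (Q a) => //; exfalso; apply: hn; by exists a.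
Qed.

Lemma exists_or (P Q : 'I_d -> bool) :
  [exists a, P a || Q a] = [exists a, P a] || [exists a, Q a].
Proof.
apply/existsP/orP => [[a /orP [hp|hq]]|[/existsP [a hp]|/existsP [a hq]]].
- by left; apply/existsP; exists a.
- by right; apply/existsP; exists a.
- by exists a; rewrite hp.
- by exists a; rewrite hq orbT.
Qed.

Lemma row_sum (c : tvert d h -> int) (j : tvert d h) :
  \sum_i c i * Delta i j =
  Posz d * c j - (\sum_i c i * Posz [exists a : 'I_d, val j == rcons (val i) a]
     + \sum_(a < d) \sum_i (if val i == rcons (val j) a then c i else 0)).
Proof.
rewrite /Delta.
under eq_bigr => i _ do rewrite mulrBr mulrA [c i * _]mulrC.
rewrite sumrB sum_pred1.
congr (_ - _).
have split_adj : forall i, Posz (tadj i j) = Posz [exists a : 'I_d, val j == rcons (val i) a]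
     + \sum_(a < d) Posz (val i == rcons (val j) a).
  move=> i; rewrite -exists_sum; last first.
    by move=> a b /eqP ->; rewrite eqseq_rcons => /andP [_ /eqP /val_inj].
  rewrite /tadj exists_or.
  case: existsP => [[a ha]|_]; case: existsP => [[b hb]|_] //.
  exfalso; move: ha hb => /eqP -> /eqP /(congr1 size); rewrite !size_rcons; lia.
under eq_bigr => i _ do rewrite split_adj mulrDr.
rewrite big_split /=; congr (_ + _).
under eq_bigr => i _ do rewrite mulr_sumr.
rewrite exchange_big /=; apply: eq_bigr => a _.
apply: eq_bigr => i _; case: eqP => _; by rewrite ?mulr1 ?mulr0.
Qed.

End Sums.

Section Main.
Variables (d h : nat).
Hypothesis hd : 3 <= d.
Hypothesis hh : 1 <= h.
Variable l : tvert d h.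
Hypothesis hl : size (val l) = h.
Local Notation lv := (val l).
Local Notation th := (theta d).
Local Notation U := (UU d h).

Definition cv (s : seq nat) : int := Posz (U (lcp s lv) * th (h.+1 - size s)).

Definition nch (w : seq nat) := if size w == 0 then d else d.-1.

Lemma valid_rcons w a : valid_word d h w ->
  valid_word d h (rcons w a) = (size w < h) && (a < nch w).
Proof.
rewrite /nch; case: w => [|x t] /=.
  by rewrite /valid_word /= andbT.
rewrite /valid_word /= size_rcons all_rcons => /andP [_ /andP [-> ->]].
by rewrite andbT andbC.
Qed.

Lemma valid_belast p b : valid_word d h (rcons p b) -> valid_word d h p /\ b < d.
Proof.
move=> hv; have := valid_all hv; rewrite all_rcons => /andP [hb _]; split => //.
move: hv; rewrite /valid_word size_rcons => /andP [hs hp].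
apply/andP; split; first lia.
case: p hs hp => //= x t _; rewrite all_rcons => /andP [-> /andP [_ ->]].
by [].
Qed.

Lemma lv_valid : valid_word d h lv.
Proof. by rewrite -mem_tw (valP l). Qed.

Lemma nth_valid s k : valid_word d h s -> k < size s ->
  nth 0 s k < (if k == 0 then d else d.-1).
Proof.
rewrite /valid_word; case: s => [|x t] //= /andP [_ /andP [hx ht]].
case: k => [|k] //= hk.
by apply: (allP ht); apply: mem_nth.
Qed.

Lemma nth_lv k : k < h -> nth 0 lv k < (if k == 0 then d else d.-1).
Proof. by move=> hk; apply: nth_valid; rewrite ?hl // lv_valid. Qed.

Lemma children (w : seq nat) : valid_word d h w ->
  (\sum_(a < d) (if rcons w a \in tree_words d h then cv (rcons w a) else 0))%R =
  Posz (if size w < h then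
          (if lcp w lv == size w then (nch w - 1) * U (size w) + U (size w).+1
           else nch w * U (lcp w lv)) * th (h - size w)
        else 0).
Proof.
move=> hw.
under eq_bigr => a _ do rewrite mem_tw valid_rcons //.
case: ltnP => hk; last first.
  by rewrite big1 // => a _; rewrite ltnNge hk.
have hn : nch w <= d by rewrite /nch; case: ifP => _; lia.
rewrite /= -big_mkcond -(big_ord_widen _ (fun a => cv (rcons w a)) hn) /cv.
rewrite -(big_morph Posz PoszD (erefl (Posz 0))).
congr Posz.
under eq_bigr => a _ do rewrite size_rcons lcp_rcons hl hk andbT subSS.
rewrite -big_distrl /=; congr (_ * _).
case: eqP => hj /=; last first.
  by rewrite sum_nat_const card_ord.
have hb : nth 0 lv (size w) < nch w by rewrite /nch; exact: nth_lv.
rewrite (bigD1 (Ordinal hb)) //= eqxx.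
rewrite (eq_bigr (fun _ => U (size w))); last first.
  move=> a ha; rewrite hj; case: eqP => // e; exfalso; move: ha.
  by rewrite -(inj_eq val_inj) /= -e eqxx.
rewrite (eq_bigl (fun i => i \in predC1 (Ordinal hb))) // sum_nat_const cardC1 card_ord.
by rewrite subn1 addnC.
Qed.


Lemma parent_nil : (\sum_(i : tvert d h) cv (val i) * Posz [exists a : 'I_d, [::] == rcons (val i) a])%R = 0%R.
Proof.
rewrite big1 // => i _; case: existsP => [[a]|_]; last by rewrite GRing.mulr0.
by case: (val i).
Qed.

Lemma parent_rcons p b : valid_word d h (rcons p b) ->
  (\sum_(i : tvert d h) cv (val i) * Posz [exists a : 'I_d, rcons p b == rcons (val i) a])%R = cv p.
Proof.
move=> hv; have [hp hb] := valid_belast hv.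
have e : cv p = (if p \in tree_words d h then cv p else 0)%R by rewrite mem_tw hp.
rewrite e -(sum_val d h p cv).
apply: eq_bigr => i _.
have -> : [exists a : 'I_d, rcons p b == rcons (val i) a] = (val i == p).
  apply/existsP/idP => [[a]|/eqP e2].
    by rewrite eqseq_rcons eq_sym => /andP [].
  by exists (Ordinal hb); rewrite e2 eqseq_rcons !eqxx.
by case: eqP => _; rewrite ?GRing.mulr1 ?GRing.mulr0.
Qed.


Lemma vertex_eq (j : tvert d h) :
  ((basis_vec l *+ NN d h) j = \sum_i [ffun i => cv (val i)] i * Delta i j)%R.
Proof.
rewrite ffunMnE ffunE.
under eq_bigr => i _ do rewrite ffunE.
rewrite (row_sum (fun i => cv (val i))).
under [X in (_ - (_ + X))%R]eq_bigr => a _ do rewrite (sum_val d h _ cv).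
rewrite -(inj_eq val_inj).
have hv := valP j; rewrite mem_tw in hv; rewrite children //.
move: (val j) hv => w hv.
have fin : forall A B C : nat, A = (B + C)%N -> (Posz C = Posz A - Posz B)%R.
  by move=> A B C ->; rewrite PoszD addrAC subrr add0r.
have pmn : forall n m : nat, (Posz n *+ m)%R = Posz (n * m).
  move=> n; elim=> [|m IH]; first by rewrite muln0.
  by rewrite GRing.mulrS IH -PoszD mulnS.
case: (lastP w) hv => [|p b] hv.
  rewrite parent_nil add0r /cv pmn -PoszM; apply: (fin).
  have -> : (lv == [::]) = false by apply/eqP => e; move: hl; rewrite e /=; lia.
  rewrite /= /nch /= subn0 hh mul0n addn0.
  have := eqn_root hd hh; move=> ->; rewrite subn0 subn1 mulnDl mulnA //.
rewrite (parent_rcons hv) /cv pmn -PoszM -PoszD; apply: (fin).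
have [hp hb] := valid_belast hv.
have hpl := lcp_le p lv.
have hsp : (size p < h)%N by move: hv; rewrite /valid_word size_rcons => /andP [? _].
rewrite /nch !size_rcons lcp_rcons hl /=.
rewrite -[ssval l]/(val l).
case: ifP => hc.
  move: (hc) => /andP [/andP [/eqP hc1 _] _].
  rewrite eqxx hc1.
  case: (ltnP (size p).+1 h) => hk.
    have -> : (lv == rcons p b) = false by apply/eqP => e; move: hl; rewrite e size_rcons; lia.
    have := eqn_mid hd hh (k := (size p).+1) ltac:(lia).
    have -> : (h.+2 - (size p).+1 = h.+1 - size p)%N by lia.
    by move=> ->; rewrite mul0n addn0.
  have ehk : h = (size p).+1 by lia.
  have -> : (lv == rcons p b) = true.
    apply/eqP/esym/lcp_eq; last by rewrite size_rcons hl.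
    by rewrite lcp_rcons size_rcons hl hc.
  have := eqn_leaf hd hh.
  have -> : (h.+1 - size p = 2)%N by lia.
  have -> : (h.+1 - (size p).+1 = 1)%N by lia.
  have -> : h.-1 = size p by lia.
  rewrite -ehk.
  by move=> ->; rewrite mul1n addn0.
case E: (_ == rcons p b).
  move/eqP: E => e.
  exfalso; rewrite e in hc.
  rewrite hsp andbT in hc.
  have := lcp_refl (rcons p b); rewrite lcp_rcons size_rcons ltnSn andbT hc => h'.
  have := lcp_le p (rcons p b); lia.
rewrite mul0n addn0.
case: (ltnP (size p).+1 h) => hk.
  have := eqn_off hd hh (k := (size p).+1) ltac:(lia) (U (lcp p lv)).
  have -> : (lcp p lv == (size p).+1) = false by rewrite ltn_eqF // ltnS lcp_le.
  have -> : (h.+2 - (size p).+1 = h.+1 - size p)%N by lia.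
  by move=> ->; rewrite mulnA.
have ehk : h = (size p).+1 by lia.
have := eqn_offleaf (h:=h) hd hh (U (lcp p lv)).
have -> : (h.+1 - size p = 2)%N by lia.
have -> : (h.+1 - (size p).+1 = 1)%N by lia.
by rewrite addn0.
Qed.

End Main.

Section Fin.
Variables d h : nat.

Lemma lam_mul (x : zvec d h) a k : in_Lambda (x *+ a)%R -> in_Lambda (x *+ (a * k))%R.
Proof.
case=> c hc; exists (c *+ k)%R => j.
rewrite ffunMnE mulrnA -ffunMnE hc -sumrMnl.
by apply: eq_bigr => i _; rewrite ffunMnE mulrnAl.
Qed.

Lemma lam_sub (x : zvec d h) a b : (b <= a)%N -> in_Lambda (x *+ a)%R -> in_Lambda (x *+ b)%R ->
  in_Lambda (x *+ (a - b))%R.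
Proof.
move=> hba [c1 h1] [c2 h2]; exists (c1 - c2)%R => j.
rewrite ffunMnE mulrnBr // -!ffunMnE h1 h2 -sumrB.
by apply: eq_bigr => i _; rewrite !ffunE mulrBl.
Qed.

End Fin.

Lemma min_ex (P : nat -> Prop) n : P n -> exists m, P m /\ forall k, (k < m)%N -> ~ P k.
Proof.
elim: n {-2}n (leqnn n) => [|N IH] n hn hP.
  exists n; split => // k hk; lia.
case: (classic (exists k, (k < n)%N /\ P k)) => [[k [hk hPk]]|hno].
  by apply: (IH k) => //; lia.
exists n; split => // k hk hPk; apply: hno; by exists k.
Qed.

Lemma big_pos d (hd : (3 <= d)%N) n : (0 < \big[lcmn/1]_(2 <= i < n) theta d i)%N.
Proof.
elim: n => [|n IH]; first by rewrite big_geq.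
case: (ltnP n 2) => hn; first by rewrite big_geq //.
rewrite big_nat_recr //= lcmn_gt0 IH th_pos //; lia.
Qed.

Theorem lemma7p3 (d h : nat) (hd : 3 <= d) (hh : 1 <= h) (l : tvert d h)
  (hl : size (val l) = h) :
  exists n : nat, order_in_G (basis_vec l) n /\ n %| bound d h.
Proof.
have hL : in_Lambda (basis_vec l *+ bound d h)%R.
  exists [ffun i => cv l (val i)] => j.
  exact: (vertex_eq hd hh hl j).
have hpos : (0 < bound d h)%N.
  rewrite /bound muln_gt0 expn_gt0 lcmn_gt0 big_pos // muln_gt0 th_pos //.
  rewrite andbT; apply/andP; split; lia.
have [m [[hm hLm] hmin]] := min_ex (P := fun k => (0 < k)%N /\ in_Lambda (basis_vec l *+ k)%R) (conj hpos hL).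
exists m; split.
  split; first exact: hm.
  split; first exact: hLm.
  move=> k /andP [hk1 hk2] hk; exact: (hmin k hk2 (conj hk1 hk)).
have hq : in_Lambda (basis_vec l *+ (bound d h - m * (bound d h %/ m)))%R.
  apply: lam_sub => //; first by rewrite mulnC leq_trunc_div.
  exact: lam_mul.
have hr : bound d h - m * (bound d h %/ m) = bound d h %% m.
  rewrite {1}(divn_eq (bound d h) m); lia.
rewrite hr in hq.
apply/dvdnP; exists (bound d h %/ m).
case: (posnP (bound d h %% m)) => hz.
  by rewrite {1}(divn_eq (bound d h) m) hz addn0.
exfalso; apply: (hmin _ _ (conj hz hq)).
by rewrite ltn_mod.
Qed.
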